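(* Let $p$ be a prime. Define $$\Phi:\mathbb{Z}_p[X_0,X_1;Y_0,Y_1]_{22}\to\mathbb{Z}_p[X_0,X_1]_2\times\mathbb{Z}_p[X_0,X_1]_4,\qquad F_0Y_0^2+F_1Y_0Y_1+F_2Y_1^2\mapsto(F_1,-F_0F_2),$$ where $F_0,F_1,F_2\in\mathbb{Z}_p[X_0,X_1]_2$, and let $\Phi_p$ be the analogous map on forms with coefficients in $\mathbb{F}_p$. Let $\overline F\in\mathbb{F}_p[X_0,X_1;Y_0,Y_1]_{22}$ be either (i) $\overline F=f(X_0Y_0,X_0Y_1+X_1Y_0)$ with $f$ an irreducible binary quadratic form over $\mathbb{F}_p$, or (ii) $\overline F=(X_0Y_1-X_1Y_0)^2$. Then $\Phi$ restricts to a measure-preserving map $$\{F\in\mathbb{Z}_p[X_0,X_1;Y_0,Y_1]_{22}:F\equiv\overline F\ (\mathrm{mod}\ p)\}\to\{G\in\mathbb{Z}_p[X_0,X_1]_2\times\mathbb{Z}_p[X_0,X_1]_4:G\equiv\Phi_p(\overline F)\ (\mathrm{mod}\ p)\}.$$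
   Context: $\mathbb{Z}_p[X_0,X_1]_d$ denotes binary forms of degree $d$ over $\mathbb{Z}_p$, and $\mathbb{Z}_p[X_0,X_1;Y_0,Y_1]_{22}$ denotes forms homogeneous of degree 2 in $(X_0,X_1)$ and of degree 2 in $(Y_0,Y_1)$; these are identified with $\mathbb{Z}_p^3$, $\mathbb{Z}_p^5$ and $\mathbb{Z}_p^9$ via coefficients and carry Haar measure, and the two residue classes above are given the (normalized) restrictions of these Haar measures. *)

(* Defs.v *)
From HB Require Import structures.
From mathcomp Require Import all_boot all_order all_algebra.
From mathcomp Require Import boolp classical_sets reals ereal.
From mathcomp Require Import measure.
From mathcomp Require Import intdiv.
Set Implicit Arguments. Unset Strict Implicit. Unset Printing Implicit Defensive.
Import Order.TTheory GRing.Theory Num.Theory.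
Local Open Scope ring_scope.
Local Open Scope classical_set_scope.

(* The p-adic integers Z_p, as compatible sequences of residues:       *)
(* zdig x k is the residue of x modulo p^k, in [0, p^k).              *)
Record Zp (p : nat) := MkZp {
  zdig : nat -> int ;
  zdig_mod : forall k, (zdig k %% (p ^ k)%:Z)%Z = zdig k ;
  zdig_compat : forall k, (zdig k.+1 %% (p ^ k)%:Z)%Z = zdig k }.

Lemma modz_expS (p k : nat) (m : int) :
  ((m %% (p ^ k.+1)%:Z)%Z %% (p ^ k)%:Z)%Z = (m %% (p ^ k)%:Z)%Z.
Proof.
rewrite {2}(divz_eq m (p ^ k.+1)%:Z) expnS PoszM mulrA.
by rewrite modzMDl.
Qed.

Section ZpOps.
Variable p : nat.

Definition Zp_zero : Zp p.
Proof. by apply: (@MkZp p (fun=> 0%R)) => k; rewrite mod0z. Defined.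

Definition Zp_add (x y : Zp p) : Zp p.
Proof.
apply: (@MkZp p (fun k => ((zdig x k + zdig y k) %% (p ^ k)%:Z)%Z)) => k.
  by rewrite modz_mod.
by rewrite modz_expS -modzDm !zdig_compat.
Defined.

Definition Zp_mul (x y : Zp p) : Zp p.
Proof.
apply: (@MkZp p (fun k => ((zdig x k * zdig y k) %% (p ^ k)%:Z)%Z)) => k.
  by rewrite modz_mod.
by rewrite modz_expS -modzMm !zdig_compat.
Defined.

Definition Zp_opp (x : Zp p) : Zp p.
Proof.
apply: (@MkZp p (fun k => ((- zdig x k) %% (p ^ k)%:Z)%Z)) => k.
  by rewrite modz_mod.
by rewrite modz_expS -modzNm !zdig_compat.
Defined.

End ZpOps.

HB.instance Definition _ p := gen_eqMixin (Zp p).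
HB.instance Definition _ p := gen_choiceMixin (Zp p).
HB.instance Definition _ p := isPointed.Build (Zp p) (Zp_zero p).

Definition Zp_red (p : nat) (x : Zp p) : 'F_p := (zdig x 1)%:~R.

(* Z_p^I (I a finite index set of coefficients) with the Borel         *)
(* sigma-algebra, generated by the balls {w | w = v mod p^k}.          *)
Definition zball (p : nat) (I : finType) (v : I -> Zp p) (k : nat)
  : set (I -> Zp p) := [set w | forall i, zdig (w i) k = zdig (v i) k].

Definition zballs (p : nat) (I : finType) : set (set (I -> Zp p)) :=
  [set A | exists v k, A = zball v k].

Definition ZpV (p : nat) (I : finType) := g_sigma_algebraType (@zballs p I).

Definition is_haar (R : realType) (p : nat) (I : finType)
  (mu : set (ZpV p I) -> \bar R) : Prop :=
  forall (v : ZpV p I) (k : nat),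
    mu (zball v k) = ((p%:R : R) ^- (#|I| * k))%:E.

Definition residue_class (p : nat) (I : finType) (Fbar : I -> 'F_p)
  : set (ZpV p I) := [set F | forall i, Zp_red (F i) = Fbar i].

(* f restricts to a measure-preserving map S -> T, where S and T carry the
   normalized restrictions of mu and nu *)
Definition measure_preserving_restr (R : realType) (d1 d2 : measure_display)
  (T1 : measurableType d1) (T2 : measurableType d2)
  (mu : set T1 -> \bar R) (nu : set T2 -> \bar R)
  (S : set T1) (T : set T2) (f : T1 -> T2) : Prop :=
  f @` S `<=` T /\
  forall B : set T2, measurable B ->
    measurable (S `&` f @^-1` B) /\
    fine (mu (S `&` f @^-1` B)) / fine (mu S) = fine (nu (T `&` B)) / fine (nu T).

(* A form in [X0,X1;Y0,Y1]_{22} is F : 'I_3 * 'I_3 -> coeffs, where    *)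
(* F (j, i) is the coefficient of X0^(2-i) X1^i Y0^(2-j) Y1^j; thus    *)
(* F = F_0 Y0^2 + F_1 Y0 Y1 + F_2 Y1^2 with F_j = fun i => F (j, i).   *)
(* A pair (G1, G2) in [X0,X1]_2 x [X0,X1]_4 is G : 'I_3 + 'I_5 -> .,   *)
(* G (inl i) = coeff of X0^(2-i) X1^i in G1, G (inr m) = coeff of      *)
(* X0^(4-m) X1^m in G2.                                                *)
Definition o0 : 'I_3 := @Ordinal 3 0 isT.
Definition o1 : 'I_3 := @Ordinal 3 1 isT.
Definition o2 : 'I_3 := @Ordinal 3 2 isT.

Definition prod22 (T : Type) (add mul : T -> T -> T) (a c : 'I_3 -> T)
  (m : 'I_5) : T :=
  match nat_of_ord m with
  | 0 => mul (a o0) (c o0)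
  | 1 => add (mul (a o0) (c o1)) (mul (a o1) (c o0))
  | 2 => add (add (mul (a o0) (c o2)) (mul (a o1) (c o1))) (mul (a o2) (c o0))
  | 3 => add (mul (a o1) (c o2)) (mul (a o2) (c o1))
  | _ => mul (a o2) (c o2)
  end.

Definition Phi_gen (T : Type) (add mul : T -> T -> T) (opp : T -> T)
  (F : 'I_3 * 'I_3 -> T) : 'I_3 + 'I_5 -> T :=
  fun o => match o with
  | inl i => F (o1, i)
  | inr m => opp (prod22 add mul (fun i => F (o0, i)) (fun i => F (o2, i)) m)
  end.

Definition Phi (p : nat) (F : ZpV p ('I_3 * 'I_3)%type) : ZpV p ('I_3 + 'I_5)%type :=
  Phi_gen (@Zp_add p) (@Zp_mul p) (@Zp_opp p) F.

Definition Phi_p (p : nat) (F : 'I_3 * 'I_3 -> 'F_p) : 'I_3 + 'I_5 -> 'F_p :=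
  Phi_gen +%R *%R -%R F.

Definition bqf_irreducible (p : nat) (a b c : 'F_p) : Prop :=
  ~ exists l0 l1 m0 m1 : 'F_p,
      [/\ a = l0 * m0, b = l0 * m1 + l1 * m0 & c = l1 * m1].

(* f(X0 Y0, X0 Y1 + X1 Y0) for f = a U^2 + b U V + c V^2:
   = a X0^2 Y0^2 + b X0^2 Y0Y1 + b X0X1 Y0^2
     + c (X0^2 Y1^2 + 2 X0X1 Y0Y1 + X1^2 Y0^2) *)
Definition Fbar_i (p : nat) (a b c : 'F_p) (ji : 'I_3 * 'I_3) : 'F_p :=
  match nat_of_ord ji.1, nat_of_ord ji.2 with
  | 0, 0 => a
  | 0, 1 => b
  | 0, 2 => c
  | 1, 0 => b
  | 1, 1 => c *+ 2
  | 2, 0 => c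
  | _, _ => 0
  end.

(* (X0 Y1 - X1 Y0)^2 = X1^2 Y0^2 - 2 X0X1 Y0Y1 + X0^2 Y1^2 *)
Definition Fbar_ii (p : nat) (ji : 'I_3 * 'I_3) : 'F_p :=
  match nat_of_ord ji.1, nat_of_ord ji.2 with
  | 0, 2 => 1
  | 1, 1 => - (1 *+ 2)
  | 2, 0 => 1
  | _, _ => 0
  end.

(* Main.v *)
Require Import Defs.
From HB Require Import structures.
From mathcomp Require Import all_boot all_order all_algebra.
From mathcomp Require Import boolp classical_sets reals ereal.
From mathcomp Require Import measure.
From mathcomp Require Import intdiv.
From mathcomp Require Import zify ring lra.
From mathcomp Require Import fsbigop cardinality measurable_structure measure_function.
Set Implicit Arguments. Unset Strict Implicit. Unset Printing Implicit Defensive.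
Import Order.TTheory GRing.Theory Num.Theory.
Local Open Scope ring_scope.
Local Open Scope classical_set_scope.

Section Basics.
Variable p : nat.
Hypothesis hp : prime p.

Lemma p_gt0 : (0 < p)%N. Proof. exact: prime_gt0. Qed.

Lemma pk_neq0 k : ((p ^ k)%:Z != 0). Proof. by rewrite eqz_nat -lt0n expn_gt0 prime_gt0. Qed.
Lemma pk_gt0 k : (0 < (p ^ k)%:Z). Proof. by rewrite ltz_nat expn_gt0 prime_gt0. Qed.

Lemma zdig_ge0 (x : Defs.Zp p) k : 0 <= zdig x k.
Proof. by rewrite -zdig_mod modz_ge0 // pk_neq0. Qed.

Lemma zdig_lt (x : Defs.Zp p) k : zdig x k < (p ^ k)%:Z.
Proof. by rewrite -zdig_mod ltz_pmod // pk_gt0. Qed.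

Lemma modz_exp_le (m : int) j k : (j <= k)%N ->
  ((m %% (p ^ k)%:Z)%Z %% (p ^ j)%:Z)%Z = (m %% (p ^ j)%:Z)%Z.
Proof.
elim: k m => [|k IH] m; first by rewrite leqn0 => /eqP ->; rewrite modz_mod.
rewrite leq_eqVlt => /orP[/eqP ->|]; first by rewrite modz_mod.
rewrite ltnS => jk.
by rewrite -(IH (m %% (p^k.+1)%:Z)%Z) // modz_expS IH.
Qed.

Lemma zdig_le (x : Defs.Zp p) j k : (j <= k)%N -> zdig x j = (zdig x k %% (p ^ j)%:Z)%Z.
Proof.
move=> jk; elim: k jk => [|k IH]; first by rewrite leqn0 => /eqP ->; rewrite zdig_mod.
rewrite leq_eqVlt => /orP[/eqP ->|]; first by rewrite zdig_mod.
by rewrite ltnS => jk; rewrite IH // -(zdig_compat x k) modz_exp_le.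
Qed.

Lemma zdig0 (x : Defs.Zp p) : zdig x 0 = 0.
Proof. by rewrite -zdig_mod expn0 modz1. Qed.

Definition zlift (n : nat) : Defs.Zp p.
Proof.
apply: (@MkZp p (fun j => ((n%:Z) %% (p ^ j)%:Z)%Z)) => k.
  by rewrite modz_mod.
by rewrite modz_expS.
Defined.

Lemma zdig_lift n j : zdig (zlift n) j = ((n%:Z) %% (p ^ j)%:Z)%Z.
Proof. by []. Qed.

Lemma zdig_lift_small k (d : 'I_(p ^ k)) : zdig (zlift d) k = (d : nat)%:Z.
Proof. by rewrite zdig_lift modz_small // ltz_nat ltn_ord andbT. Qed.

Lemma dig_proof (x : Defs.Zp p) k : (absz (zdig x k) < p ^ k)%N.
Proof. have h1 := zdig_ge0 x k; have h2 := zdig_lt x k; lia. Qed.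

Definition dig k (x : Defs.Zp p) : 'I_(p ^ k) := Ordinal (dig_proof x k).

Lemma dig_val (x : Defs.Zp p) k : ((dig k x : nat)%:Z) = zdig x k.
Proof. by rewrite /= gez0_abs // zdig_ge0. Qed.

Lemma Fp_int_mod (z : int) : (((z %% p%:Z)%Z)%:~R : 'F_p) = z%:~R.
Proof.
have e : (z%:~R : 'F_p) = (((z %/ p)%Z * p%:Z)%:~R) + ((z %% p)%Z)%:~R.
  by rewrite -intrD -divz_eq.
rewrite e intrM.
have -> : ((p%:Z)%:~R : 'F_p) = 0 by rewrite -pmulrn pchar_Fp_0.
by rewrite mulr0 add0r.
Qed.

Lemma Fp_int_eq0 (z : int) : ((z%:~R : 'F_p) == 0) = (p%:Z %| z)%Z.
Proof.
rewrite -Fp_int_mod.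
have h0 := modz_ge0 z (pk_neq0 1); rewrite expn1 in h0.
have h1 := ltz_pmod z (pk_gt0 1); rewrite expn1 in h1.
have [n hn] : exists n : nat, (z %% p)%Z = n%:Z by exists (absz (z %% p)%Z); lia.
apply/idP/idP.
  move=> /eqP h; apply/dvdz_mod0P; rewrite hn.
  move: h; rewrite hn -pmulrn => /(congr1 (fun x : 'F_p => (x : nat))) /=.
  rewrite val_Fp_nat //= modn_small; last by lia.
  by move=> ->.
by move/dvdz_mod0P ->.
Qed.

Lemma Fp_int_eq (z z' : int) : ((z%:~R : 'F_p) == z'%:~R) = (p%:Z %| z - z')%Z.
Proof. by rewrite -Fp_int_eq0 intrD intrN subr_eq0. Qed.


Lemma cN (x y d : int) : (x %% d)%Z = (y %% d)%Z -> ((-x) %% d)%Z = ((-y) %% d)%Z.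
Proof. by move=> h; rewrite -modzNm h modzNm. Qed.
Lemma cD (x y x' y' d : int) : (x %% d)%Z = (x' %% d)%Z -> (y %% d)%Z = (y' %% d)%Z ->
  ((x + y) %% d)%Z = ((x' + y') %% d)%Z.
Proof. by move=> h1 h2; rewrite -modzDm h1 h2 modzDm. Qed.

Lemma zdig_Phi_inl (F : ZpV p ('I_3 * 'I_3)%type) i k :
  zdig (Phi F (inl i)) k = zdig (F (o1, i)) k.
Proof. by []. Qed.

Lemma zdig_Phi_inr (F : ZpV p ('I_3 * 'I_3)%type) m k :
  zdig (Phi F (inr m)) k = ((- prod22 +%R *%R (fun i => zdig (F (o0, i)) k)
     (fun i => zdig (F (o2, i)) k) m) %% (p ^ k)%:Z)%Z.
Proof.
rewrite /Phi /Phi_gen /prod22; case: m => [[|[|[|[|m]]]] hm] /=.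
all: apply: cN; rewrite ?modz_mod; repeat (apply: cD; rewrite ?modz_mod).
all: by rewrite ?modz_mod.
Qed.

Lemma Zp_red_Phi (F : ZpV p ('I_3 * 'I_3)%type) o :
  Zp_red (Phi F o) = Phi_p (fun i => Zp_red (F i)) o.
Proof.
case: o => [i|m] //.
rewrite /Zp_red zdig_Phi_inr expn1 Fp_int_mod // /Phi_p /Phi_gen /prod22.
by case: m => [[|[|[|[|m]]]] hm] /=; rewrite ?intrN ?intrD ?intrM.
Qed.

End Basics.

Section Cyl.
Variables (p : nat) (R : realType) (I : finType).
Hypothesis hp : prime p.
Variable mu : {measure set (ZpV p I) -> \bar R}.
Hypothesis Hmu : is_haar mu.

Definition liftv k (d : {ffun I -> 'I_(p ^ k)}) : ZpV p I := fun i => zlift p (d i).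
Definition digv k (x : ZpV p I) : {ffun I -> 'I_(p ^ k)} := [ffun i => dig hp k (x i)].
Definition cyl k (A : set (ZpV p I)) := forall x y : ZpV p I,
  (forall i, zdig (x i) k = zdig (y i) k) -> A x -> A y.

Lemma liftv_dig k (d : {ffun I -> 'I_(p ^ k)}) i : zdig (liftv d i) k = ((d i : nat)%:Z).
Proof. exact: zdig_lift_small. Qed.

Lemma liftv_digv k x i : zdig (liftv (digv k x) i) k = zdig (x i) k.
Proof. by rewrite liftv_dig ffunE dig_val. Qed.

Lemma zball_measurable (v : ZpV p I) k : measurable (zball v k : set (ZpV p I)).
Proof. by apply: sub_sigma_algebra; exists v, k. Qed.

Lemma digv_eq k (x : ZpV p I) (e : {ffun I -> 'I_(p ^ k)}) :
  (forall i, zdig (x i) k = zdig (liftv e i) k) -> digv k x = e.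
Proof. by move=> h; apply/ffunP => i; apply/val_inj; rewrite ffunE /= h liftv_dig. Qed.

Lemma cyl_measurable k (A : set (ZpV p I)) : cyl k A -> measurable A.
Proof.
move=> cA; set P := [pred d : {ffun I -> 'I_(p ^ k)} | `[< A (liftv d) >]].
have -> : A = \bigcup_(d in [set` P]) (zball (liftv d) k : set (ZpV p I)).
  apply/seteqP; split.
    move=> x Ax; exists (digv k x).
      by rewrite /= /P inE; apply: (cA x) => // i; rewrite liftv_digv.
    by move=> i; rewrite liftv_digv.
  move=> x [d Pd hx]; apply: (cA (liftv d)); first by move=> i; rewrite hx.
  by move: Pd; rewrite /= /P inE.
apply: fin_bigcup_measurable; first exact: cardinality.finite_finset.
by move=> d _; apply: zball_measurable.
Qed.

Lemma cyl_measure k (A : set (ZpV p I)) : cyl k A ->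
  measurable A /\ mu A = ((#|[pred d : {ffun I -> 'I_(p ^ k)} | `[< A (liftv d) >]]|)%:R
           * ((p%:R : R) ^- (#|I| * k)))%:E.
Proof.
move=> cA; set P := [pred d : {ffun I -> 'I_(p ^ k)} | `[< A (liftv d) >]].
have eqA : A = \bigcup_(d in [set` P]) (zball (liftv d) k : set (ZpV p I)).
  apply/seteqP; split.
    move=> x Ax; exists (digv k x).
      rewrite /= /P inE; apply: (cA x) => // i.
      by rewrite liftv_digv.
    by move=> i; rewrite liftv_digv.
  move=> x [d Pd hx]; apply: (cA (liftv d)); first by move=> i; rewrite hx.
  by move: Pd; rewrite /= /P inE.
have mA : measurable A.
  rewrite eqA; apply: fin_bigcup_measurable; first exact: cardinality.finite_finset.
  by move=> d _; apply: zball_measurable.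
split => //.
rewrite eqA measure_fin_bigcup //; first last.
- by move=> d _; apply: zball_measurable.
- move=> d d' _ _ [x [hd hd']]; apply/ffunP => i; apply/val_inj.
  have := hd i; rewrite (hd' i) !liftv_dig => /eqP; by rewrite eqz_nat => /eqP.
rewrite (eq_fsbigr (fun _ => ((p%:R : R) ^- (#|I| * k))%:E)); last first.
  by move=> d _; apply: Hmu.
rewrite -(bigfs _ _ (r := enum {ffun I -> 'I_(p ^ k)})) ?enum_uniq //; last by move=> i _; rewrite mem_enum.
rewrite sumEFin big_enum_cond /=; congr (_%:E).
rewrite (eq_bigl (fun i => i \in P)); last by move=> i; rewrite inE.
by rewrite sumr_const mulr_natl.
Qed.

End Cyl.

Section Alg.
Variable p : nat.
Hypothesis hp : prime p.

Lemma ord3_cases (i : 'I_3) : i = o0 \/ i = o1 \/ i = o2.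
Proof.
case: i => [[|[|[|i]]] hi]; [left|right;left|right;right|] => //; try exact/val_inj.
Qed.

Notation P22 := (prod22 +%R *%R).

Lemma uniq_step (j k : nat) (a a' b b' : 'I_3 -> int) : (j < k)%N ->
  (forall m : 'I_5, ((p ^ k)%:Z %| P22 a b m - P22 a' b' m)%Z) ->
  b o0 = b' o0 ->
  (forall i, ((p ^ j)%:Z %| a i - a' i)%Z) -> (forall i, ((p ^ j)%:Z %| b i - b' i)%Z) ->
  ((a' o2)%:~R : 'F_p) != 0 -> ((b o0)%:~R : 'F_p) != 0 ->
  ((b o1)%:~R : 'F_p) = 0 -> ((b o2)%:~R : 'F_p) = 0 ->
  (forall i, ((p ^ j.+1)%:Z %| a i - a' i)%Z) /\ (forall i, ((p ^ j.+1)%:Z %| b i - b' i)%Z).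
Proof.
move=> jk hk hb0 ha hb na2 nb0 zb1 zb2.
set q := (p ^ j)%:Z.
have qn0 : q != 0 by rewrite /q eqz_nat -lt0n expn_gt0 prime_gt0.
pose s i := ((a' i - a i) %/ q)%Z; pose t i := ((b' i - b i) %/ q)%Z.
have hs i : a' i = a i + s i * q.
  by rewrite /s divzK; [ring | rewrite -opprB rpredN].
have ht i : b' i = b i + t i * q.
  by rewrite /t divzK; [ring | rewrite -opprB rpredN].
have t0 : t o0 = 0 by rewrite /t hb0 subrr div0z.
pose L m := P22 a' t m + P22 s b m.
have hL m : (p%:Z %| L m)%Z.
  have e : P22 a b m - P22 a' b' m = - (q * L m).
    rewrite /L /prod22; case: m => [[|[|[|[|m]]]] hm] /=;
    rewrite !ht ![a' _]hs; ring.
  move: (hk m); rewrite e rpredN.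
  have -> : (p ^ k)%:Z = q * (p ^ (k - j))%:Z by rewrite /q -PoszM -expnD subnKC // ltnW.
  rewrite dvdz_mul2l // => h; apply: dvdz_trans h.
  rewrite dvdzE /=; apply: dvdn_exp; [by rewrite subn_gt0 | exact: dvdnn].
have hL0 m : ((L m)%:~R : 'F_p) = 0 by apply/eqP; rewrite (Fp_int_eq0 hp).
have e4 := hL0 (@Ordinal 5 4 isT).
have e3 := hL0 (@Ordinal 5 3 isT).
have e2 := hL0 (@Ordinal 5 2 isT).
have e1 := hL0 (@Ordinal 5 1 isT).
have e0 := hL0 (@Ordinal 5 0 isT).
move: e4 e3 e2 e1 e0; rewrite /L /prod22 /= !(intrD, intrM) t0 zb1 zb2 !(mulr0, mul0r, addr0, add0r).
move=> /eqP; rewrite mulf_eq0 (negbTE na2) /= => /eqP T2.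
rewrite T2 !(mulr0, mul0r, addr0, add0r).
move=> /eqP; rewrite mulf_eq0 (negbTE na2) /= => /eqP T1.
rewrite T1 !(mulr0, mul0r, addr0, add0r).
move=> /eqP; rewrite mulf_eq0 (negbTE nb0) orbF => /eqP S2.
move=> /eqP; rewrite mulf_eq0 (negbTE nb0) orbF => /eqP S1.
move=> /eqP; rewrite mulf_eq0 (negbTE nb0) orbF => /eqP S0.
have hS i : (p%:Z %| s i)%Z.
  by rewrite -(Fp_int_eq0 hp); case: (ord3_cases i) => [->|[->|->]]; apply/eqP.
have hT i : (p%:Z %| t i)%Z.
  by rewrite -(Fp_int_eq0 hp); case: (ord3_cases i) => [->|[->|->]]; apply/eqP; rewrite ?t0.
have -> : (p ^ j.+1)%:Z = p%:Z * q by rewrite /q -PoszM expnS.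
split => i.
  have -> : a i - a' i = - (s i * q) by rewrite hs; ring.
  by rewrite rpredN dvdz_mul.
have -> : b i - b' i = - (t i * q) by rewrite ht; ring.
by rewrite rpredN dvdz_mul.
Qed.


Lemma uniq_all k (a a' b b' : 'I_3 -> int) : (0 < k)%N ->
  (forall m : 'I_5, ((p ^ k)%:Z %| P22 a b m - P22 a' b' m)%Z) ->
  b o0 = b' o0 ->
  (forall i, (p%:Z %| a i - a' i)%Z) -> (forall i, (p%:Z %| b i - b' i)%Z) ->
  ((a' o2)%:~R : 'F_p) != 0 -> ((b o0)%:~R : 'F_p) != 0 ->
  ((b o1)%:~R : 'F_p) = 0 -> ((b o2)%:~R : 'F_p) = 0 ->
  (forall i, ((p ^ k)%:Z %| a i - a' i)%Z) /\ (forall i, ((p ^ k)%:Z %| b i - b' i)%Z).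
Proof.
move=> hk hdiv hb0 ha hb n1 n2 z1 z2.
suff H : forall j, (0 < j <= k)%N ->
  (forall i, ((p ^ j)%:Z %| a i - a' i)%Z) /\ (forall i, ((p ^ j)%:Z %| b i - b' i)%Z).
  by apply: H; rewrite hk leqnn.
elim=> [|j IH] //; case: j IH => [|j] IH hj; first by rewrite expn1; split.
move: hj => /andP [_ hjk].
have [h1 h2] := IH (ltnW hjk).
exact: (uniq_step hjk hdiv hb0 h1 h2 n1 n2 z1 z2).
Qed.

End Alg.


Section Res.
Variable p : nat.
Hypothesis hp : prime p.
Variable I : finType.

Lemma Fp_val_lt (x : 'F_p) : (val x < p)%N.
Proof. by rewrite -[X in (_ < X)%N](Fp_cast hp) ltn_ord. Qed.

Lemma red_dig (x : Defs.Zp p) k : (0 < k)%N -> ((zdig x k)%:~R : 'F_p) = Zp_red x.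
Proof. by move=> hk; rewrite /Zp_red (zdig_le x hk) expn1 (Fp_int_mod hp). Qed.

Lemma residue_cyl k (G : I -> 'F_p) : (0 < k)%N -> cyl k (residue_class G).
Proof. by move=> hk x y h hx i; rewrite -(red_dig _ hk) -h (red_dig _ hk) hx. Qed.

Lemma residue_ball (G : I -> 'F_p) :
  residue_class G = (zball (fun i => zlift p (val (G i))) 1 : set (ZpV p I)).
Proof.
apply/seteqP; split => x hx i.
  rewrite zdig_lift expn1 modz_small; last by rewrite le0z_nat ltz_nat Fp_val_lt.
  have := hx i; rewrite -(red_dig _ (ltn0Sn 0)) -(dig_val hp (x i) 1) -pmulrn.
  move=> /(congr1 (fun y : 'F_p => (y : nat))) /=.
  rewrite val_Fp_nat // modn_small => [-> //|].
  by rewrite -[X in (_ < X)%N]expn1 (dig_proof hp (x i) 1).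
rewrite /Zp_red hx zdig_lift expn1 modz_small; last by rewrite le0z_nat ltz_nat Fp_val_lt.
by apply/val_inj; rewrite -pmulrn /= val_Fp_nat // modn_small // Fp_val_lt.
Qed.

Lemma Phi_dig_eq (F F' : ZpV p ('I_3 * 'I_3)%type) k :
  (forall i, zdig (F i) k = zdig (F' i) k) ->
  forall o, zdig (Phi F o) k = zdig (Phi F' o) k.
Proof.
move=> h [i|m]; first exact: h.
rewrite !zdig_Phi_inr.
have -> : (fun i => zdig (F (o0, i)) k) = (fun i => zdig (F' (o0, i)) k).
  by apply: funext => i; exact: h.
have -> : (fun i => zdig (F (o2, i)) k) = (fun i => zdig (F' (o2, i)) k).
  by apply: funext => i; exact: h.
by [].
Qed.

Lemma zdig_dvd_eq (x y : Defs.Zp p) k :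
  ((p ^ k)%:Z %| zdig x k - zdig y k)%Z -> zdig x k = zdig y k.
Proof. by move=> h; rewrite -zdig_mod -[RHS]zdig_mod; apply/eqP; rewrite eqz_mod_dvd. Qed.

End Res.

Lemma sum_eq_max (T : finType) (P : pred T) (f : T -> nat) c :
  (forall x, x \in P -> f x <= c)%N -> (\sum_(x in P) f x = #|P| * c)%N ->
  forall x, x \in P -> f x = c.
Proof.
move=> hle hs x Px; apply/eqP; rewrite eqn_leq hle //=; rewrite leqNgt; apply/negP => lt.
have h1 : (\sum_(y in P | y != x) f y <= \sum_(y in P | y != x) c)%N.
  by apply: leq_sum => y /andP [Py _]; exact: hle.
move: hs; rewrite -sum_nat_const (bigD1 x) //= [X in _ = X](bigD1 x) //=.
lia.
Qed.

Lemma modN_dvd (X Y M : int) : ((-X) %% M)%Z = ((-Y) %% M)%Z -> (M %| X - Y)%Z.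
Proof.
move/eqP; rewrite eqz_mod_dvd => h.
have -> : X - Y = - ((- X) - (- Y)) by ring.
by rewrite rpredN.
Qed.

Section Main.
Variables (p : nat) (R : realType).
Hypothesis hp : prime p.
Variable mu : {measure set (ZpV p ('I_3 * 'I_3)%type) -> \bar R}.
Variable nu : {measure set (ZpV p ('I_3 + 'I_5)%type) -> \bar R}.
Hypotheses (Hmu : is_haar mu) (Hnu : is_haar nu).
Variable Fbar : 'I_3 * 'I_3 -> 'F_p.
Hypotheses (hF20 : Fbar (o2, o0) != 0) (hF21 : Fbar (o2, o1) = 0)
  (hF22 : Fbar (o2, o2) = 0) (hF02 : Fbar (o0, o2) != 0).

Local Notation I9 := ('I_3 * 'I_3)%type.
Local Notation I8 := ('I_3 + 'I_5)%type.
Let S : set (ZpV p I9) := residue_class Fbar.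
Let T : set (ZpV p I8) := residue_class (Phi_p Fbar).

Lemma mS : measurable S.
Proof. by rewrite /S (residue_ball hp); exact: zball_measurable. Qed.
Lemma mT : measurable T.
Proof. by rewrite /T (residue_ball hp); exact: zball_measurable. Qed.
Lemma muS : mu S = ((p%:R : R) ^- 9)%:E.
Proof. by rewrite /S (residue_ball hp) Hmu card_prod card_ord. Qed.
Lemma nuT : nu T = ((p%:R : R) ^- 8)%:E.
Proof. by rewrite /T (residue_ball hp) Hnu card_sum !card_ord. Qed.
Lemma PhiST : (@Phi p) @` S `<=` T.
Proof.
move=> _ [F hF <-] o; rewrite /T /residue_class /= (Zp_red_Phi hp).
by congr (Phi_p _ o); apply: funext => i; exact: hF i.
Qed.
Lemma Phi_cyl (w : ZpV p I8) k : cyl k ((@Phi p) @^-1` (zball w k : set (ZpV p I8))).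
Proof. by move=> x y h hx o; rewrite -(Phi_dig_eq h o). Qed.
Lemma mPhi : measurable_fun setT (@Phi p).
Proof.
apply: (@measurability _ _ _ _ setT (@Phi p) (@zballs p I8)) => //.
move=> _ [B [w [k ->]] <-]; rewrite setTI.
exact: (cyl_measurable hp (@Phi_cyl w k)).
Qed.
Lemma fiber_uniq k (hk : (0 < k)%N) (w : ZpV p I8) (F F' : ZpV p I9) :
  S F -> S F' -> zball w k (Phi F) -> zball w k (Phi F') ->
  zdig (F (o2, o0)) k = zdig (F' (o2, o0)) k ->
  forall i, zdig (F i) k = zdig (F' i) k.
Proof.
move=> hS hS' hP hP' h20.
pose a i := zdig (F (o0, i)) k; pose a' i := zdig (F' (o0, i)) k.
pose b i := zdig (F (o2, i)) k; pose b' i := zdig (F' (o2, i)) k.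
have hdiv (m : 'I_5) : ((p ^ k)%:Z %| prod22 +%R *%R a b m - prod22 +%R *%R a' b' m)%Z.
  have e := hP (inr m); have e' := hP' (inr m).
  rewrite -e' !zdig_Phi_inr in e.
  exact: modN_dvd e.
have hres i : (p%:Z %| zdig (F i) k - zdig (F' i) k)%Z.
  by rewrite -(Fp_int_eq hp) !(red_dig hp _ hk) hS hS'.
have n1 : ((a' o2)%:~R : 'F_p) != 0 by rewrite /a' (red_dig hp _ hk) hS'.
have n2 : ((b o0)%:~R : 'F_p) != 0 by rewrite /b (red_dig hp _ hk) hS.
have z1 : ((b o1)%:~R : 'F_p) = 0 by rewrite /b (red_dig hp _ hk) hS.
have z2 : ((b o2)%:~R : 'F_p) = 0 by rewrite /b (red_dig hp _ hk) hS.
have [ha hb] := uniq_all hp hk hdiv h20 (fun i => hres (o0, i)) (fun i => hres (o2, i))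
  n1 n2 z1 z2.
move=> [j i]; case: (ord3_cases j) => [->|[->|->]].
- exact: zdig_dvd_eq (ha i).
- have e := hP (inl i); have e' := hP' (inl i).
  by rewrite !zdig_Phi_inl in e e'; rewrite e e'.
- exact: zdig_dvd_eq (hb i).
Qed.

Definition fib k (w : ZpV p I8) := [pred d : {ffun I9 -> 'I_(p ^ k)} |
  `[< ((@Phi p) @^-1` (zball w k : set (ZpV p I8)) `&` S) (liftv d) >]].

Lemma fib_le k (hk : (0 < k)%N) w : (#|fib k w| <= p ^ k.-1)%N.
Proof.
have gP (d : {ffun I9 -> 'I_(p ^ k)}) : (d (o2, o0) %/ p < p ^ k.-1)%N.
  by rewrite ltn_divLR ?prime_gt0 // -expnSr prednK.
pose g d := Ordinal (gP d).
have inj : {in fib k w &, injective g}.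
  move=> d d'; rewrite /fib !inE => [[hP hS]] [hP' hS'] /(congr1 val) /= eq.
  apply/ffunP => i; apply/val_inj.
  suff : zdig (liftv d i) k = zdig (liftv d' i) k.
    by rewrite !liftv_dig => /eqP; rewrite eqz_nat => /eqP.
  apply: (fiber_uniq hk hS hS' hP hP').
  rewrite !liftv_dig; congr Posz.
  have hm : (d (o2, o0) %% p = d' (o2, o0) %% p)%N.
    have := hS (o2, o0); have := hS' (o2, o0).
    rewrite -!(red_dig hp _ hk) !liftv_dig -!pmulrn => e1 e2.
    have := congr1 (fun y : 'F_p => (y : nat)) (etrans e2 (esym e1)).
    by rewrite /= !(val_Fp_nat hp).
  by rewrite [LHS](divn_eq _ p) [RHS](divn_eq _ p) eq hm.
rewrite -(card_in_imset inj); apply: leq_trans (max_card _) _.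
by rewrite card_ord.
Qed.

Lemma card_from (N a b : nat) :
  (N%:R * (p%:R : R) ^- (b + a) = (p%:R) ^- b) -> N = (p ^ a)%N.
Proof.
have hp0 : (p%:R : R) != 0 by rewrite pnatr_eq0 -lt0n prime_gt0.
move=> h.
have : (N%:R : R) = (p%:R) ^+ a.
  have e := congr1 (fun z => z * (p%:R : R) ^+ (b + a)) h; simpl in e.
  rewrite mulfVK ?expf_neq0 // in e.
  by rewrite e exprD mulKf ?expf_neq0.
by rewrite -natrX => /eqP; rewrite eqr_nat => /eqP.
Qed.

Lemma PS_card k (hk : (0 < k)%N) :
  #|[pred d : {ffun I9 -> 'I_(p ^ k)} | `[< S (liftv d) >]]| = (p ^ (9 * k.-1))%N.
Proof.
have [_ e] := cyl_measure hp Hmu (@residue_cyl p hp I9 k Fbar hk).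
move: e; rewrite muS card_prod !card_ord => -[e2].
apply: (card_from (b := 9)); rewrite e2; congr (_ * (_ ^+ _)^-1).
by rewrite -mulnS prednK.
Qed.

Lemma PT_card k (hk : (0 < k)%N) :
  #|[pred e : {ffun I8 -> 'I_(p ^ k)} | `[< T (liftv e) >]]| = (p ^ (8 * k.-1))%N.
Proof.
have [_ e] := cyl_measure hp Hnu (@residue_cyl p hp I8 k (Phi_p Fbar) hk).
move: e; rewrite nuT card_sum !card_ord => -[e2].
apply: (card_from (b := 8)); rewrite e2; congr (_ * (_ ^+ _)^-1).
by rewrite -mulnS prednK.
Qed.

Lemma sum_fib k (hk : (0 < k)%N) :
  #|[pred d : {ffun I9 -> 'I_(p ^ k)} | `[< S (liftv d) >]]| =
  (\sum_(e in [pred e : {ffun I8 -> 'I_(p ^ k)} | `[< T (liftv e) >]]) #|fib k (liftv e)|)%N.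
Proof.
rewrite -sum1_card.
rewrite (partition_big (fun d => digv hp k (Phi (liftv d)))
  (fun e => e \in [pred e : {ffun I8 -> 'I_(p ^ k)} | `[< T (liftv e) >]])) /=; last first.
  move=> d; rewrite !inE => hSd.
  have TF : T (Phi (liftv d)) by apply: PhiST; exists (liftv d).
  apply: (@residue_cyl p hp I8 k (Phi_p Fbar) hk (Phi (liftv d))) TF => o.
  by rewrite liftv_digv.
apply: eq_bigr => e _; rewrite sum1_card; apply: eq_card => d; rewrite unfold_in /= !inE.
apply/andP/asboolP => [[hSd /eqP he]|[hz hSd]].
  split; last exact/asboolP.
  by move=> o; rewrite -he liftv_digv.
split; first exact/asboolP.
by apply/eqP/digv_eq => o; exact: hz o.
Qed.

Lemma fib_eq k (hk : (0 < k)%N) w : T w -> #|fib k w| = (p ^ k.-1)%N.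
Proof.
move=> Tw.
have key' := @sum_eq_max _ [pred e : {ffun I8 -> 'I_(p ^ k)} | `[< T (liftv e) >]]
  (fun e => #|fib k (liftv e)|) (p ^ k.-1)%N (fun e _ => fib_le hk (liftv e)).
have hs : (\sum_(e in [pred e : {ffun I8 -> 'I_(p ^ k)} | `[< T (liftv e) >]])
    #|fib k (liftv e)| =
  #|[pred e : {ffun I8 -> 'I_(p ^ k)} | `[< T (liftv e) >]]| * p ^ k.-1)%N.
  rewrite -sum_fib // PS_card // PT_card // -expnD; congr (p ^ _)%N; lia.
move: key' => /(_ hs) key'.
have -> : #|fib k w| = #|fib k (liftv (digv hp k w))|.
  apply: eq_card => d; rewrite !inE.
  apply/asboolP/asboolP => [[h1 h2]|[h1 h2]]; split => // o.
    by rewrite liftv_digv; exact: h1 o.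
  by have := h1 o; rewrite liftv_digv.
apply: key'; rewrite inE.
apply: (@residue_cyl p hp I8 k (Phi_p Fbar) hk w _ _ Tw) => o.
by rewrite liftv_digv.
Qed.

Lemma ball_eq (w : ZpV p I8) k :
  mu ((@Phi p) @^-1` (zball w k : set (ZpV p I8)) `&` S) =
  (((p%:R : R)^-1)%:E * nu ((zball w k : set (ZpV p I8)) `&` T))%E.
Proof.
have hp0 : (p%:R : R) != 0 by rewrite pnatr_eq0 -lt0n prime_gt0.
case: k => [|k].
  have -> : (zball w 0 : set (ZpV p I8)) = setT.
    by apply/seteqP; split => // x _ i; rewrite !zdig0.
  rewrite preimage_setT !setTI muS nuT -EFinM; congr (_%:E).
  by rewrite -invfM -exprS.
have hk : (0 < k.+1)%N by [].
have [Tw|nTw] := pselect (T w).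
  have -> : (zball w k.+1 : set (ZpV p I8)) `&` T = zball w k.+1.
    apply/seteqP; split => [x [] //|x hx]; split => //.
    apply: (@residue_cyl p hp I8 k.+1 (Phi_p Fbar) hk w x _ Tw) => o.
    by rewrite hx.
  rewrite Hnu card_sum !card_ord.
  have cA : cyl k.+1 ((@Phi p) @^-1` (zball w k.+1 : set (ZpV p I8)) `&` S).
    move=> x y h [h1 h2]; split.
      exact: (@Phi_cyl w k.+1 x y h h1).
    exact: (@residue_cyl p hp I9 k.+1 Fbar hk x y h h2).
  have [_ ->] := cyl_measure hp Hmu cA.
  rewrite card_prod !card_ord -EFinM; congr (_%:E).
  have := fib_eq hk Tw; rewrite /fib => -> /=.
  rewrite natrX.
  have -> : (3 * 3 * k.+1 = 9 + k * 9)%N by lia.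
  have -> : ((3 + 5) * k.+1 = 8 + k * 8)%N by lia.
  rewrite !exprD !exprM.
  have hk0 : (p%:R : R) ^+ k != 0 by rewrite expf_neq0.
  by field; rewrite ?expf_neq0.
have -> : (zball w k.+1 : set (ZpV p I8)) `&` T = set0.
  apply/seteqP; split => // x [hx Tx]; apply: nTw.
  by apply: (@residue_cyl p hp I8 k.+1 (Phi_p Fbar) hk x w _ Tx) => o; rewrite hx.
have -> : (@Phi p) @^-1` (zball w k.+1 : set (ZpV p I8)) `&` S = set0.
  apply/seteqP; split => // F [hF SF]; apply: nTw.
  have TF : T (Phi F) by apply: PhiST; exists F.
  by apply: (@residue_cyl p hp I8 k.+1 (Phi_p Fbar) hk (Phi F) w _ TF) => o; rewrite hF.
by rewrite !measure0 mule0.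
Qed.

Lemma p_pos : (0 : R) <= (p%:R)^-1. Proof. by rewrite invr_ge0 ler0n. Qed.

Lemma main_eq B : measurable B ->
  mu ((@Phi p) @^-1` B `&` S) = (((p%:R : R)^-1)%:E * nu (B `&` T))%E.
Proof.
move=> mB.
pose m1 := pushforward (mrestr mu mS) (@Phi p).
pose m2 := mscale (NngNum p_pos) (mrestr nu mT).
pose G := [set A : set (ZpV p I8) | A = set0 \/ zballs A].
have pt : ZpV p I8 := point.
have Tball : setT = (zball pt 0 : set (ZpV p I8)).
  by apply/seteqP; split => // x _ i; rewrite !zdig0.
have := @measure_unique _ R (ZpV p I8) G (fun=> setT) _ _ _ _ m1 m2 _ _ B mB.
apply => //.
- apply/seteqP; split.
    apply: smallest_sub; first exact: smallest_sigma_algebra.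
    by move=> A zA; apply: sub_sigma_algebra; right.
  apply: smallest_sub; first exact: sigma_algebra_measurable.
  move=> A [->|zA]; [exact: measurable0 | exact: sub_sigma_algebra].
- move=> A A' [->|hA] [->|hB]; try by left; rewrite ?set0I ?setI0.
  case: hA => [v [k ->]]; case: hB => [w [l ->]].
  have [[x [hx1 hx2]]|e] := pselect (exists x, zball v k x /\ zball w l x); last first.
    left; apply/seteqP; split => // y [h1 h2]; apply: e; by exists y.
  right; wlog kl : v w k l x hx1 hx2 / (k <= l)%N.
    move=> H; case: (leqP k l) => [kl|lk]; first exact: (H v w k l x).
    rewrite setIC; apply: (H w v l k x) => //; exact: ltnW.
  exists w, l; apply/seteqP; split; first by move=> y [].
  move=> y hy; split => // i.
  by rewrite (zdig_le (y i) kl) hy -hx2 -(zdig_le (x i) kl) hx1.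
- by move=> _; right; rewrite Tball; exists pt, 0%N.
- by rewrite bigcup_const.
- exact: mPhi.
- move=> mf A [->|[w [k ->]]].
    by rewrite !measure0.
  rewrite /m1 /m2 /pushforward /mrestr /mscale /=. exact: ball_eq.
- move=> mf _; change (mu ((@Phi p) @^-1` setT `&` S) < +oo)%E.
  by rewrite preimage_setT setTI muS ltry.
Qed.

Theorem main_thm : measure_preserving_restr mu nu S T (@Phi p).
Proof.
split; first exact: PhiST.
move=> B mB; split.
  apply: measurableI; first exact: mS.
  by rewrite -[X in measurable X]setTI; apply: mPhi.
rewrite setIC main_eq // muS.
rewrite [fine (nu T)](_ : _ = (p%:R : R) ^- 8); last by rewrite nuT.
rewrite [B `&` T]setIC.
have hp0 : (p%:R : R) != 0 by rewrite pnatr_eq0 -lt0n prime_gt0.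
have : (nu (T `&` B) <= nu T)%E.
  by apply: le_measure; rewrite ?inE //; [exact: measurableI mT mB | exact: mT].
have := measure_ge0 nu (T `&` B).
case: (nu (T `&` B)) => [x| |] /= h0 hle.
- by field; rewrite ?expf_neq0.
- by rewrite mulry gtr0_sg ?invr_gt0 ?ltr0n ?prime_gt0 // mul1e /= !mul0r.
- by rewrite mulrNy gtr0_sg ?invr_gt0 ?ltr0n ?prime_gt0 // mul1e /= !mul0r.
Qed.
End Main.

Theorem lemma5p3 (p : nat) (hp : prime p) (R : realType)
  (mu : {measure set (ZpV p ('I_3 * 'I_3)%type) -> \bar R})
  (nu : {measure set (ZpV p ('I_3 + 'I_5)%type) -> \bar R})
  (Hmu : is_haar mu) (Hnu : is_haar nu)
  (Fbar : 'I_3 * 'I_3 -> 'F_p) :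
  ((exists a b c : 'F_p, bqf_irreducible a b c /\ Fbar = Fbar_i a b c)
   \/ Fbar = Fbar_ii p) ->
  measure_preserving_restr mu nu (residue_class Fbar)
    (residue_class (Phi_p Fbar)) (@Phi p).
Proof.
move=> hF.
have [h20 [h21 [h22 h02]]] : Fbar (o2, o0) != 0 /\ Fbar (o2, o1) = 0 /\
    Fbar (o2, o2) = 0 /\ Fbar (o0, o2) != 0.
  case: hF => [[a [b [c [irr ->]]]]|->].
    have c0 : c != 0.
      apply/eqP => c0; apply: irr; exists 1, 0, a, b.
      by split; rewrite ?c0; ring.
    by [].
  by rewrite /Fbar_ii /=.
exact: (main_thm hp Hmu Hnu h20 h21 h22 h02).
Qed.
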